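(* Let $f$ and $g$ be completely multiplicative functions with $|f(n)|,|g(n)|\le1$ for all $n$, suppose $\mathbb{D}_\beta(f,g)<\infty$ for some $\beta>0$, and let $h$ be defined by $g=f*h$. Then the series $\sum_{n=1}^\infty\frac{|h(n)|^2}{n^\beta}$ is convergent.
   Context: $(f*h)(n)=\sum_{dm=n}f(d)h(m)$. $\mathbb{D}_\beta(f,g)^2:=\sum_p \frac{1-\Re(f(p)\overline{g(p)})}{p^\beta}$ (sum over primes). *)

(* Defs.v *)
From HB Require Import structures.
From mathcomp Require Import all_boot all_order all_algebra.
From mathcomp Require Import complex.
From mathcomp Require Import all_classical all_reals all_analysis.
Set Implicit Arguments. Unset Strict Implicit. Unset Printing Implicit Defensive.
Import Order.TTheory GRing.Theory Num.Theory.
Import numFieldNormedType.Exports.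
Local Open Scope ring_scope.

Definition dconv (R : realType) (f h : nat -> R[i]) (n : nat) : R[i] :=
  \sum_(d <- divisors n) f d * h (n %/ d)%N.

Definition completely_multiplicative (R : realType) (f : nat -> R[i]) : Prop :=
  f 1%N = 1 /\ forall m n : nat, (0 < m)%N -> (0 < n)%N -> f (m * n)%N = f m * f n.

(* k-th term of the prime sum defining D_beta(f,g)^2:
   (1 - Re(f(p) conj(g(p)))) / p^beta if p is prime, 0 otherwise. *)
Definition pretentious_term (R : realType) (beta : R) (f g : nat -> R[i]) (p : nat) : R :=
  if prime p then (1 - complex.Re (f p * conjc (g p))) / (p%:R `^ beta) else 0.

(* D_beta(f,g) < oo : the (nonnegative-term) prime series converges. *)
Definition pretentious_dist_finite (R : realType) (beta : R) (f g : nat -> R[i]) : Prop :=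
  cvgn (series (pretentious_term beta f g)).

(* Main.v *)
Require Import Defs.
From HB Require Import structures.
From mathcomp Require Import all_boot all_order all_algebra.
From mathcomp Require Import complex.
From mathcomp Require Import all_classical all_reals all_analysis.
From mathcomp Require Import zify ring lra.
Import Order.TTheory GRing.Theory Num.Theory.
Import numFieldNormedType.Exports.
Local Open Scope ring_scope.

Lemma dvd_split m n d : coprime m n -> (d %| m * n)%N ->
  d = (gcdn d m * gcdn d n)%N.
Proof.
move=> co dv; apply/eqP; rewrite eqn_dvd; apply/andP; split.
  rewrite muln_gcdl dvdn_gcd dvdn_mulr //=.
  by rewrite muln_gcdr dvdn_gcd dvdn_mull // dvdn_mulr.
rewrite Gauss_dvd ?dvdn_gcdl //.
apply: coprime_dvdl (dvdn_gcdr _ _) _; apply: coprime_dvdr (dvdn_gcdr _ _) _.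
exact: co.
Qed.

Lemma gcd_part m n d1 d2 : coprime m n -> (d1 %| m)%N -> (d2 %| n)%N ->
  gcdn (d1 * d2) m = d1.
Proof.
move=> co h1 h2; rewrite gcdnC Gauss_gcdl.
  by apply/gcdn_idPr.
apply: coprime_dvdr h2 _; exact: co.
Qed.

Lemma big_divisorsM (V : nmodType) m n (F : nat -> V) :
  coprime m n -> (0 < m)%N -> (0 < n)%N ->
  \sum_(d <- divisors (m * n)) F d =
  \sum_(d1 <- divisors m) \sum_(d2 <- divisors n) F (d1 * d2)%N.
Proof.
move=> co m0 n0.
rewrite -(big_allpairs (F := fun x : nat * nat => F (x.1 * x.2)%N)).
rewrite -(big_map (fun x : nat * nat => (x.1 * x.2)%N) xpredT F).
apply: perm_big; apply: uniq_perm.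
- exact: divisors_uniq.
- rewrite map_allpairs; apply: allpairs_uniq; try exact: divisors_uniq.
  move=> [a b] [c e] /allpairsP[[a' b'] [ha hb ->]] /allpairsP[[c' e'] [hc he ->]] /= eq.
  move: ha hb hc he; rewrite /= -!dvdn_divisors // => ha hb hc he.
  have E1 := gcd_part _ _ _ _ co ha hb; have E2 := gcd_part _ _ _ _ co hc he.
  rewrite coprime_sym in co.
  have E3 := gcd_part _ _ _ _ co hb ha; have E4 := gcd_part _ _ _ _ co he hc.
  rewrite mulnC in E3 E4.
  by congr pair; [rewrite -E1 -E2 eq | rewrite -E3 eq mulnC E4].
move=> d; rewrite -dvdn_divisors ?muln_gt0 ?m0 //.
apply/idP/idP.
  move=> dv; apply/mapP; exists (gcdn d m, gcdn d n); last exact: dvd_split dv.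
  by apply/allpairsP; exists (gcdn d m, gcdn d n); rewrite -!dvdn_divisors // !dvdn_gcdr.
move=> /mapP[[a b] /allpairsP[[a' b'] [ha hb [-> ->]]] ->] /=.
by move: ha hb; rewrite -!dvdn_divisors // => ha hb; rewrite dvdn_mul.
Qed.

Lemma cmX (R : realType) (f : nat -> R[i]) p k :
  completely_multiplicative f -> (0 < p)%N -> f (p ^ k)%N = f p ^+ k.
Proof.
move=> [f1 fM] p0; elim: k => [|k IH]; first by rewrite expn0 expr0.
by rewrite expnS fM ?expn_gt0 ?p0 // IH exprS.
Qed.

Lemma h_one (R : realType) (f g h : nat -> R[i]) :
  completely_multiplicative f -> completely_multiplicative g ->
  (forall n : nat, (0 < n)%N -> g n = dconv f h n) -> h 1%N = 1.
Proof.
move=> [f1 _] [g1 _] hc; have := hc 1%N isT.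
by rewrite /dconv (_ : divisors 1 = [:: 1%N]) // big_seq1 f1 mul1r g1 divnn.
Qed.

Lemma h_mult (R : realType) (f g h : nat -> R[i]) :
  completely_multiplicative f -> completely_multiplicative g ->
  (forall n : nat, (0 < n)%N -> g n = dconv f h n) ->
  forall m n, coprime m n -> (0 < m)%N -> (0 < n)%N -> h (m * n)%N = h m * h n.
Proof.
move=> fc gc hc.
have [f1 fM] := fc; have [g1 gM] := gc.
suff: forall N m n, (m * n < N)%N -> coprime m n -> (0 < m)%N -> (0 < n)%N ->
  h (m * n)%N = h m * h n.
  by move=> H m n; apply: (H (m * n).+1).
elim=> [//|N IH] m n mnN co m0 n0.
have mn0 : (0 < m * n)%N by rewrite muln_gt0 m0.
have E := hc _ mn0; rewrite gM // (hc m) // (hc n) // /dconv in E.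
rewrite big_divisorsM // in E.
pose Y d1 d2 := f d1 * h (m %/ d1)%N * (f d2 * h (n %/ d2)%N).
pose I (d1 d2 : nat) := if (d1 == 1%N) && (d2 == 1%N) then h (m * n)%N - h m * h n else 0.
have step : forall d1 d2, d1 \in divisors m -> d2 \in divisors n ->
  f (d1 * d2)%N * h ((m * n) %/ (d1 * d2))%N = Y d1 d2 + I d1 d2.
  move=> d1 d2; rewrite -!dvdn_divisors // => h1 h2.
  have d10 : (0 < d1)%N by apply: dvdn_gt0 h1.
  have d20 : (0 < d2)%N by apply: dvdn_gt0 h2.
  have Q : ((m * n) %/ (d1 * d2) = (m %/ d1) * (n %/ d2))%N.
    by rewrite -{1}(divnK h1) -{1}(divnK h2) mulnACA mulnK // muln_gt0 d10.
  rewrite Q fM // /Y /I.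
  have q10 : (0 < m %/ d1)%N by rewrite divn_gt0 // dvdn_leq.
  have q20 : (0 < n %/ d2)%N by rewrite divn_gt0 // dvdn_leq.
  case: eqP => [->|ne1] /=.
    case: eqP => [->|ne2].
      by rewrite f1 !divn1 !mul1r addrC subrK.
    rewrite !divn1 addr0 IH //.
    + by rewrite f1 !mul1r mulrCA.
    + have : (n %/ d2 < n)%N by apply: ltn_Pdiv => //; lia.
      move: mnN; nia.
    + by apply: coprime_dvdr (dvdn_div h2) co.
  rewrite addr0 IH //.
  + by rewrite mulrACA.
  + have : (m %/ d1 < m)%N by apply: ltn_Pdiv => //; lia.
    have : (n %/ d2 <= n)%N by apply: leq_div.
    move: mnN; nia.
  + by apply: coprime_dvdl (dvdn_div h1) _; apply: coprime_dvdr (dvdn_div h2) co.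
have {}E : \sum_(d1 <- divisors m) \sum_(d2 <- divisors n) (Y d1 d2 + I d1 d2) =
   (\sum_(d <- divisors m) f d * h (m %/ d)%N) *
   (\sum_(d <- divisors n) f d * h (n %/ d)%N).
  rewrite E big_seq [RHS]big_seq; apply: eq_bigr => d1 h1.
  rewrite big_seq [RHS]big_seq; apply: eq_bigr => d2 h2.
  by rewrite step.
rewrite big_distrlr /= in E.
move: E; under eq_bigr do rewrite big_split /=.
rewrite big_split /=.
have -> : \sum_(i <- divisors m) \sum_(i0 <- divisors n) I i i0 = h (m * n)%N - h m * h n.
  rewrite (bigD1_seq 1%N) ?divisor1 ?divisors_uniq //=.
  rewrite (bigD1_seq 1%N) ?divisor1 ?divisors_uniq //= /I eqxx /=.
  rewrite big1 ?addr0; last by move=> i /negbTE ->.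
  rewrite big1 ?addr0 //; move=> i /negbTE ->; rewrite big1 //.
move=> /eqP; rewrite -subr_eq0 addrAC subrr add0r subr_eq0 => /eqP //.
Qed.

Lemma dconv_pow (R : realType) (f h : nat -> R[i]) p k : prime p ->
  dconv f h (p ^ k)%N = \sum_(i < k.+1) f (p ^ i)%N * h (p ^ (k - i))%N.
Proof.
move=> pp; have p1 := prime_gt1 pp; have p0 := prime_gt0 pp.
rewrite /dconv (perm_big [seq (p ^ i)%N | i <- iota 0 k.+1]).
  rewrite big_map (_ : iota 0 k.+1 = index_iota 0 k.+1); last by rewrite /index_iota subn0.
  rewrite big_mkord; apply: eq_bigr => i _; rewrite -expnB //.
  by rewrite -ltnS.
apply: uniq_perm; first exact: divisors_uniq.
  by rewrite map_inj_uniq ?iota_uniq //; apply: expnI.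
move=> d; rewrite -dvdn_divisors ?expn_gt0 ?p0 //.
apply/idP/idP => [/(dvdn_pfactor _ _ pp)[m mk ->]|/mapP[m]].
  by apply/mapP; exists m => //; rewrite mem_iota.
by rewrite mem_iota add0n ltnS => /andP[_ mk] ->; apply/(dvdn_pfactor _ _ pp); exists m.
Qed.

Lemma h_pow (R : realType) (f g h : nat -> R[i]) :
  completely_multiplicative f -> completely_multiplicative g ->
  (forall n : nat, (0 < n)%N -> g n = dconv f h n) ->
  forall p k, prime p -> h (p ^ k.+1)%N = g p ^+ k * (g p - f p).
Proof.
move=> fc gc hc p k pp; have p0 := prime_gt0 pp.
have pk0 : forall j, (0 < p ^ j)%N by move=> j; rewrite expn_gt0 p0.
have E1 := hc _ (pk0 k.+1); have E2 := hc _ (pk0 k).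
rewrite dconv_pow // big_ord_recl /= in E1.
rewrite dconv_pow // in E2.
have [f1 _] := fc.
rewrite expn0 f1 mul1r subn0 in E1.
have S : \sum_(i < k.+1) f (p ^ bump 0 i)%N * h (p ^ (k.+1 - bump 0 i))%N = f p * g (p ^ k)%N.
  rewrite E2 mulr_sumr; apply: eq_bigr => i _.
  by rewrite /bump /= add1n subSS !(cmX _ _ _ _ fc p0) exprS mulrA.
rewrite S !(cmX _ _ _ _ gc p0) in E1.
by rewrite mulrBr -exprSr E1 [g p ^+ k * f p]mulrC addrK.
Qed.
Arguments h_mult {R f g h}.
Arguments h_pow {R f g h}.
Arguments h_one {R f g h}.



Lemma geo_bound (R : realFieldType) (y : R) N : 0 <= y < 1 ->
  \sum_(j < N) y ^+ j.+1 <= y / (1 - y).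
Proof.
move=> /andP[y0 y1].
have E : \sum_(j < N) y ^+ j.+1 * (1 - y) = y - y ^+ N.+1.
  elim: N => [|N IH]; first by rewrite big_ord0 expr1 subrr.
  by rewrite big_ord_recr /= IH [y ^+ N.+2]exprS; ring.
have y1' : 0 < 1 - y by rewrite subr_gt0.
rewrite -mulr_suml in E.
rewrite ler_pdivlMr // E lerBlDr lerDl exprn_ge0 //.
Qed.

Lemma sum_inj_le (R : realDomainType) (I J : finType) (A : {pred I}) (B : {pred J})
  (phi : I -> J) (G : J -> R) :
  {in A &, injective phi} -> {in A, forall i, phi i \in B} ->
  (forall j, j \in B -> 0 <= G j) ->
  \sum_(i in A) G (phi i) <= \sum_(j in B) G j.
Proof.
move=> inj AB G0.
rewrite -(big_imset _ inj) /=.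
rewrite [leRHS](bigID (fun j => j \in phi @: A)) /=.
rewrite -[leLHS]addr0 lerD //; last by apply: sumr_ge0 => j /andP[/G0].
rewrite le_eqVlt; apply/orP; left; apply/eqP; apply: eq_bigl => j.
case Hj: (j \in phi @: A); rewrite ?andbT ?andbF //.
by move/imsetP: Hj => [i iA ->]; rewrite AB.
Qed.
Arguments sum_inj_le {R I J A} B {phi G}.

Lemma cplx_ineq (R : realType) (a b c d : R) :
  a ^+ 2 + b ^+ 2 <= 1 -> c ^+ 2 + d ^+ 2 <= 1 ->
  (c - a) ^+ 2 + (d - b) ^+ 2 <= 2 * (1 - (a * c + b * d)).
Proof. move=> h1 h2; rewrite !sqrrB; lra. Qed.

Lemma cplx_ineq2 (R : realType) (a b c d : R) :
  a ^+ 2 + b ^+ 2 <= 1 -> c ^+ 2 + d ^+ 2 <= 1 ->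
  a * c + b * d <= 1.
Proof. move=> h1 h2. have := sqr_ge0 (a - c). have := sqr_ge0 (b - d). rewrite !sqrrB. lra. Qed.

Lemma normc_ge0 {R : realType} (z : R[i]) : 0 <= Normc.normc z.
Proof. by case: z => a b /=; apply: sqrtr_ge0. Qed.

Lemma normc_sq (R : realType) (a b : R) : Normc.normc (Complex a b) ^+ 2 = a ^+ 2 + b ^+ 2.
Proof. by rewrite /= sqr_sqrtr // addr_ge0 // sqr_ge0. Qed.

Lemma normcX (R : realType) (z : R[i]) k : Normc.normc (z ^+ k) = Normc.normc z ^+ k.
Proof.
elim: k => [|k IH]; first by rewrite !expr0 Normc.normc1.
by rewrite !exprS Normc.normcM IH.
Qed.

Lemma cplx_D {R : realType} {z w : R[i]} : Normc.normc z <= 1 -> Normc.normc w <= 1 ->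
  Normc.normc (w - z) ^+ 2 <= 2 * (1 - complex.Re (z * conjc w)) /\
  complex.Re (z * conjc w) <= 1.
Proof.
move=> hz hw.
have sq1 : forall u : R[i], Normc.normc u <= 1 -> Normc.normc u ^+ 2 <= 1.
  by move=> u hu; apply: exprn_ile1 => //; apply: normc_ge0.
move: (sq1 _ hz) (sq1 _ hw); case: z {hz} => a b; case: w {hw} => c d.
rewrite !normc_sq => h1 h2.
have -> : complex.Re (Complex a b * conjc (Complex c d)) = a * c + b * d.
  by rewrite /conjc /= mulrN opprK.
by split; [apply: cplx_ineq | apply: cplx_ineq2].
Qed.

Definition aa (R : realType) (beta : R) (h : nat -> R[i]) (n : nat) : R :=
  Normc.normc (h n) ^+ 2 / (n%:R `^ beta).
Arguments aa {R}.

Lemma aa_ge0 (R : realType) (beta : R) h n : 0 <= aa beta h n.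
Proof. by rewrite /aa divr_ge0 ?powR_ge0 // sqr_ge0. Qed.

Lemma aa1 {R : realType} (beta : R) {h : nat -> R[i]} : h 1%N = 1 -> aa beta h 1 = 1.
Proof. by move=> h1; rewrite /aa h1 Normc.normc1 expr1n powR1 divr1. Qed.

Lemma aa_mult (R : realType) (beta : R) (f g h : nat -> R[i]) :
  completely_multiplicative f -> completely_multiplicative g ->
  (forall n : nat, (0 < n)%N -> g n = dconv f h n) ->
  forall m n, coprime m n -> (0 < m)%N -> (0 < n)%N ->
  aa beta h (m * n)%N = aa beta h m * aa beta h n.
Proof.
move=> fc gc hc m n co m0 n0.
by rewrite /aa (h_mult fc gc hc) // Normc.normcM exprMn natrM powRM ?ler0n // mulf_div.
Qed.

Lemma aa_pow_le (R : realType) (beta : R) (f g h : nat -> R[i]) :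
  completely_multiplicative f -> completely_multiplicative g ->
  (forall n : nat, (0 < n)%N -> Normc.normc (g n) <= 1) ->
  (forall n : nat, (0 < n)%N -> g n = dconv f h n) ->
  forall p k, prime p ->
  aa beta h (p ^ k.+1)%N <= Normc.normc (g p - f p) ^+ 2 / (p%:R `^ beta) ^+ k.+1.
Proof.
move=> fc gc gb hc p k pp.
have p0 := prime_gt0 pp.
rewrite /aa (h_pow fc gc hc) // Normc.normcM normcX exprMn natrX.
have E : (p%:R ^+ k.+1) `^ beta = (p%:R `^ beta) ^+ k.+1 :> R.
  by rewrite -powR_mulrn ?ler0n // -powRrM mulrC powRrM powR_mulrn ?powR_ge0.
rewrite E.
apply: ler_wpM2r; first by rewrite invr_ge0 exprn_ge0 // powR_ge0.
apply: ler_piMl; first exact: sqr_ge0.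
have g0 := normc_ge0 (g p).
have g1 : Normc.normc (g p) ^+ k <= 1 by apply: exprn_ile1 => //; apply: gb.
by apply: exprn_ile1 => //; apply: exprn_ge0.
Qed.

Lemma r_gt1 {R : realType} {beta : R} : 0 < beta -> 1 < 2%:R `^ beta.
Proof.
move=> b0.
have h1 : 1 <= 2%:R `^ beta.
  by rewrite -[X in X <= _](powRr0 2%:R); apply: ler_powR; [rewrite ler1n | exact: ltW].
rewrite lt_neqAle h1 andbT eq_sym powR_eq1 negb_or negb_or.
by rewrite (gt_eqF b0) pnatr_eq1 /= ltNge ler0n.
Qed.

Lemma factor_le (R : realType) (beta : R) (f g h : nat -> R[i]) :
  completely_multiplicative f -> completely_multiplicative g ->
  (forall n : nat, (0 < n)%N -> Normc.normc (f n) <= 1) ->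
  (forall n : nat, (0 < n)%N -> Normc.normc (g n) <= 1) ->
  0 < beta ->
  (forall n : nat, (0 < n)%N -> g n = dconv f h n) ->
  forall p M, prime p ->
  \sum_(j < M) aa beta h (p ^ j)%N <=
  1 + (2 * (2%:R `^ beta) / (2%:R `^ beta - 1)) * pretentious_term beta f g p.
Proof.
move=> fc gc fb gb b0 hc p M pp.
have p0 := prime_gt0 pp.
set r := 2%:R `^ beta; set x := p%:R `^ beta.
have r1 : 1 < r by apply: r_gt1.
have xr : r <= x.
  by apply: ge0_ler_powR; rewrite ?nnegrE ?ler0n ?(ltW b0) // ler_nat prime_gt1.
have x1 : 1 < x by apply: lt_le_trans xr.
have x0 : 0 < x by apply: lt_trans x1.
have [Du u1] := cplx_D (fb p p0) (gb p p0).
set u := complex.Re (f p * conjc (g p)) in Du u1.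
set D := Normc.normc (g p - f p) ^+ 2 in Du.
have t_eq : pretentious_term beta f g p = (1 - u) / x by rewrite /pretentious_term pp.
rewrite t_eq.
have K0 : 0 <= 2 * r / (r - 1) by rewrite divr_ge0 ?subr_ge0 ?(ltW r1) // mulr_ge0 // ltW // (lt_trans ltr01).
have t0 : 0 <= (1 - u) / x by rewrite divr_ge0 ?subr_ge0 // ltW.
case: M => [|M].
  by rewrite big_ord0 addr_ge0 // mulr_ge0.
rewrite big_ord_recl expn0 (aa1 _ (h_one fc gc hc)) lerD2l.
have y01 : 0 <= x^-1 < 1 by rewrite invr_ge0 (ltW x0) /= invf_lt1.
apply: (@le_trans _ _ (D * (x^-1 / (1 - x^-1)))).
  apply: (@le_trans _ _ (D * \sum_(j < M) x^-1 ^+ j.+1)); last first.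
    by apply: ler_wpM2l; [rewrite /D sqr_ge0 | apply: geo_bound].
  rewrite mulr_sumr; apply: ler_sum => i _.
  by rewrite /= /bump /= add1n exprVn; apply: aa_pow_le.
have key : x^-1 / (1 - x^-1) <= r / (r - 1) * x^-1.
  rewrite -subr_ge0.
  have -> : r / (r - 1) * x^-1 - x^-1 / (1 - x^-1) = (x - r) / ((r - 1) * x * (x - 1)).
    by field; rewrite !subr_eq0 (gt_eqF x1) (gt_eqF x0) (gt_eqF r1).
  by rewrite divr_ge0 ?subr_ge0 // !mulr_ge0 ?subr_ge0 // ltW.
apply: (@le_trans _ _ (2 * (1 - u) * (r / (r - 1) * x^-1))).
  apply: ler_pM => //; first by rewrite /D sqr_ge0.
  by case/andP: y01 => ? ?; rewrite divr_ge0 // subr_ge0 ltW.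
by rewrite le_eqVlt; apply/orP; left; apply/eqP; ring.
Qed.

Definition smooth (P n : nat) : bool := all (fun q => (q <= P)%N) (primes n).

Lemma decomp p n : prime p -> (0 < n)%N ->
  [/\ n = (p ^ logn p n * (n %/ p ^ logn p n))%N, coprime (p ^ logn p n) (n %/ p ^ logn p n),
      (0 < n %/ p ^ logn p n)%N, (logn p n < n)%N & coprime p (n %/ p ^ logn p n)].
Proof.
move=> pp n0; have dv := pfactor_dvdnn p n.
have pe0 : (0 < p ^ logn p n)%N by rewrite expn_gt0 prime_gt0.
have [m' co' Em'] := pfactor_coprime pp n0.
have Em : (n %/ p ^ logn p n = m')%N by rewrite {1}Em' mulnK.
rewrite Em; split => //.
- by rewrite mulnC -Em'.
- by apply: coprimeXl.
- by move: n0; rewrite Em' muln_gt0 => /andP[].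
- by apply: leq_trans (ltn_expl _ (prime_gt1 pp)) (dvdn_leq n0 dv).
Qed.

Lemma smooth0 n : (1 < n)%N -> smooth 0 n = false.
Proof.
move=> n1; apply/negbTE/negP => /allP /(_ (pdiv n)).
rewrite mem_primes pdiv_prime // pdiv_dvd (ltn_trans _ n1) // => /(_ isT).
by rewrite leqn0 => /eqP e; have := pdiv_prime n1; rewrite e.
Qed.

Lemma smoothS_np P n : ~~ prime P.+1 -> smooth P.+1 n = smooth P n.
Proof.
move=> np; apply/allP/allP => H q qn; have := H q qn.
  rewrite leq_eqVlt ltnS => /orP[/eqP e|//].
  by move: qn; rewrite mem_primes e (negbTE np).
by move=> le; apply: leq_trans le _.
Qed.

Lemma smooth_div P p n : prime p -> p = P.+1 -> (0 < n)%N -> smooth p n ->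
  smooth P (n %/ p ^ logn p n).
Proof.
move=> pp eP n0 sn.
have [En co m0 _ cop] := decomp _ _ pp n0.
apply/allP => q qm; have qn : q \in primes n.
  move: qm; rewrite !mem_primes n0 => /and3P[-> _ qd] /=.
  by apply: dvdn_trans qd _; apply: dvdn_div; apply: pfactor_dvdnn.
have := allP sn q qn; rewrite eP leq_eqVlt ltnS => /orP[/eqP e|//].
move: qm; rewrite mem_primes => /and3P[_ _ qd].
have pq : p = q by rewrite eP e.
by move: cop; rewrite prime_coprime // {1}pq qd.
Qed.

Lemma smooth_bound (R : realType) (beta : R) (f g h : nat -> R[i]) :
  completely_multiplicative f -> completely_multiplicative g ->
  (forall n : nat, (0 < n)%N -> Normc.normc (f n) <= 1) ->
  (forall n : nat, (0 < n)%N -> Normc.normc (g n) <= 1) ->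
  0 < beta ->
  (forall n : nat, (0 < n)%N -> g n = dconv f h n) ->
  forall P M,
  \sum_(k < M | smooth P k.+1) aa beta h k.+1 <=
  \prod_(q < P.+1 | prime q)
     (1 + (2 * (2%:R `^ beta) / (2%:R `^ beta - 1)) * pretentious_term beta f g q).
Proof.
move=> fc gc fb gb b0 hc.
set K := 2 * (2%:R `^ beta) / (2%:R `^ beta - 1).
have r1 := r_gt1 b0.
have K0 : 0 <= K by rewrite divr_ge0 ?subr_ge0 ?(ltW r1) // mulr_ge0 // ltW // (lt_trans ltr01).
have t0 : forall q, 0 <= pretentious_term beta f g q.
  move=> q; rewrite /pretentious_term; case: ifP => // qp.
  have q0 := prime_gt0 qp.
  have [_ u1] := cplx_D (fb q q0) (gb q q0).
  by rewrite divr_ge0 ?powR_ge0 // subr_ge0.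
have F0 : forall q, 0 <= 1 + K * pretentious_term beta f g q.
  by move=> q; rewrite addr_ge0 // mulr_ge0.
have h1 := h_one fc gc hc.
elim=> [|P IH] M.
  rewrite [X in _ <= X]big_mkcond big_ord1 /=.
  case: M => [|M]; first by rewrite big_ord0.
  rewrite big_mkcond big_ord_recl /= (aa1 _ h1) big1 ?addr0 //.
  by move=> i _; rewrite smooth0.
case: (boolP (prime P.+1)) => pp; last first.
  rewrite [X in _ <= X]big_mkcond big_ord_recr /= (negbTE pp) mulr1 -big_mkcond /=.
  by under eq_bigl do rewrite smoothS_np //; apply: IH.
rewrite [X in _ <= X]big_mkcond big_ord_recr /= pp -big_mkcond /=.
set p := P.+1 in pp *.
case: M => [|M].
  by rewrite big_ord0 mulr_ge0 // prodr_ge0.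
set G := fun x : 'I_M.+1 * 'I_M.+1 => aa beta h (p ^ x.1)%N * aa beta h (x.2).+1.
set phi := fun k : 'I_M.+1 =>
  (inord (logn p k.+1) : 'I_M.+1, inord ((k.+1 %/ p ^ logn p k.+1).-1) : 'I_M.+1).
have Hphi : forall k : 'I_M.+1, G (phi k) = aa beta h k.+1.
  move=> k; have [En co m0 lt _] := decomp _ _ pp (ltn0Sn k).
  rewrite /G /phi /= !inordK.
  - rewrite prednK // -(aa_mult _ _ _ _ _ fc gc hc) //; first by rewrite -En.
  - by have := leq_div k.+1 (p ^ logn p k.+1); have := ltn_ord k; lia.
  - by have := ltn_ord k; lia.
rewrite (eq_bigr (fun k => G (phi k))); last by move=> k _; rewrite Hphi.
apply: (le_trans (sum_inj_le [pred x : 'I_M.+1 * 'I_M.+1 | smooth P (x.2).+1] _ _ _)).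
- move=> k1 k2 _ _ [E1 E2].
  have [En1 _ m01 lt1 _] := decomp _ _ pp (ltn0Sn k1).
  have [En2 _ m02 lt2 _] := decomp _ _ pp (ltn0Sn k2).
  have b1 : (logn p k1.+1 < M.+1)%N by have := ltn_ord k1; lia.
  have b2 : (logn p k2.+1 < M.+1)%N by have := ltn_ord k2; lia.
  have c1 : ((k1.+1 %/ p ^ logn p k1.+1).-1 < M.+1)%N.
    by have := leq_div k1.+1 (p ^ logn p k1.+1); have := ltn_ord k1; lia.
  have c2 : ((k2.+1 %/ p ^ logn p k2.+1).-1 < M.+1)%N.
    by have := leq_div k2.+1 (p ^ logn p k2.+1); have := ltn_ord k2; lia.
  move: E1 E2 => /(congr1 val) /= E1 /(congr1 val) /= E2.
  rewrite !inordK // in E1 E2.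
  have Em : (k1.+1 %/ p ^ logn p k1.+1 = k2.+1 %/ p ^ logn p k2.+1)%N.
    by rewrite -(prednK m01) -(prednK m02) E2.
  apply: val_inj; apply: succn_inj; rewrite [LHS]En1 [RHS]En2.
  by congr (p ^ _ * _)%N.
- move=> k sk0; have sk : smooth p k.+1 := sk0; rewrite inE /=.
  have [En co m0 lt _] := decomp _ _ pp (ltn0Sn k).
  rewrite inordK ?prednK //; first exact: smooth_div sk.
  by have := leq_div k.+1 (p ^ logn p k.+1); have := ltn_ord k; lia.
- by move=> x _; rewrite /G mulr_ge0 // aa_ge0.
have -> : \sum_(x in [pred x : 'I_M.+1 * 'I_M.+1 | smooth P (x.2).+1]) G x =
   (\sum_(j < M.+1) aa beta h (p ^ j)%N) * \sum_(l < M.+1 | smooth P l.+1) aa beta h l.+1.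
  rewrite big_distrlr /= pair_big /=; apply: eq_big => [[j l]|[j l] _] //.
rewrite mulrC; apply: ler_pM.
- by apply: sumr_ge0 => *; apply: aa_ge0.
- by apply: sumr_ge0 => *; apply: aa_ge0.
- exact: IH.
- exact: factor_le.
Qed.

Theorem lemma2 (R : realType) (beta : R) (f g h : nat -> R[i]) :
  completely_multiplicative f -> completely_multiplicative g ->
  (forall n : nat, (0 < n)%N -> Normc.normc (f n) <= 1) ->
  (forall n : nat, (0 < n)%N -> Normc.normc (g n) <= 1) ->
  0 < beta ->
  pretentious_dist_finite beta f g ->
  (forall n : nat, (0 < n)%N -> g n = dconv f h n) ->
  cvgn (series (fun k : nat => Normc.normc (h k.+1) ^+ 2 / ((k.+1)%:R `^ beta))).
Proof.
move=> fc gc fb gb b0 dfin hc.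
set K := 2 * (2%:R `^ beta) / (2%:R `^ beta - 1).
have r1 := r_gt1 b0.
have K0 : 0 <= K by rewrite divr_ge0 ?subr_ge0 ?(ltW r1) // mulr_ge0 // ltW // (lt_trans ltr01).
have t0 : forall q, 0 <= pretentious_term beta f g q.
  move=> q; rewrite /pretentious_term; case: ifP => // qp.
  have q0 := prime_gt0 qp.
  have [_ u1] := cplx_D (fb q q0) (gb q q0).
  by rewrite divr_ge0 ?powR_ge0 // subr_ge0.
set t := pretentious_term beta f g in t0 *.
have tsum : forall N, \sum_(q < N) t q <= limn (series t).
  move=> N; have := nondecreasing_cvgn_le _ dfin N.
  rewrite /series /= big_mkord; apply.
  by apply: nondecreasing_series => n _ _; apply: t0.
have Bbound : forall N, \prod_(q < N.+1 | prime q) (1 + K * t q) <= expR (K * limn (series t)).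
  move=> N.
  apply: (@le_trans _ _ (\prod_(q < N.+1 | prime q) expR (K * t q))).
    apply: ler_prod => q _; apply/andP; split.
      by rewrite addr_ge0 // (mulr_ge0 K0 (t0 q)).
    exact: (@expR_ge1Dx R (K * t q)).
  rewrite -expR_sum ler_expR -mulr_sumr ler_wpM2l //.
  apply: le_trans (tsum N.+1); rewrite big_mkcond /=; apply: ler_sum => q _.
  by case: ifP.
apply: nondecreasing_is_cvgn.
  apply/nondecreasing_seqP => n; rewrite /series /= big_nat_recr //= lerDl.
  by rewrite divr_ge0 ?powR_ge0 // sqr_ge0.
exists (expR (K * limn (series t))) => _ [N _ <-].
apply: (le_trans _ (le_trans (smooth_bound _ _ _ _ _ fc gc fb gb b0 hc N N) (Bbound N))).
rewrite /series /= big_mkord le_eqVlt; apply/orP; left; apply/eqP.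
apply: eq_big => // k; apply/esym/allP => q; rewrite mem_primes => /and3P[_ _ qd].
by have := dvdn_leq (ltn0Sn k) qd; have := ltn_ord k; lia.
Qed.
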